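(* In the setting described in the context (the random experiment for SA2), for any construction map $\zeta$ and any slot allocation $\tau$ of $\Lambda(\zeta)$ that occur with non-zero probability, the associated service placement $X^\tau$ is feasible, i.e. $\sum_{i\in S}s_i\mathbf 1[j\in X^\tau_i]\le c_j$ for all $j\in V$.
   Context: An SPSC instance: finite sets $S$ (services), $V$ (nodes), $U$ (users); sizes $s_i>0$; capacities $c_j>0$; for each user $k$ a service $i_k\in S$, a set $T_k\subseteq V$, a reward $w_k>0$. Let $\{x_{ij}\},\{y_k\}$ be an optimal solution of the LP with nonnegative variables: maximize $\sum_ky_kw_k$ s.t. $y_k\le\sum_{j\in T_k}x_{i_kj}$, $y_k\le1$; $\sum_ix_{ij}s_i\le c_j$; $x_{ij}=0$ if $s_i>c_j$; $0\le x_{ij}\le1$. Let $\beta:=1/4,\gamma:=1/2,\delta:=1/4$, $\mathbb N=\{1,2,\dots\}$. For $j\in V$: $P_j^\oplus:=\{i:c_j/2<s_i\le c_j\}$, $P_j^\ominus:=\{i:c_j/4<s_i\le c_j/2\}$, $P_j^q:=\{i:\gamma^qc_j\beta<s_i\le\gamma^{q-1}c_j\beta\}$ ($q\in\mathbb N$); $d_j^q:=\sum_{i\in P_j^q}x_{ij}$ for $q\in\mathbb N\cup\{\oplus,\ominus\}$; $v_j:=\delta c_j/\sum_{i:s_i\le c_j\beta}s_ix_{ij}$; $n_j^q:=\lceil v_jd_j^q\rceil$; $h_j:=d_j^\ominus$ if $d_j^\ominus<2$, else $d_j^\ominus/2$. A construction map $\zeta:V\to\{1,2,3\}$ has slot set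 $\Lambda(\zeta)$ (slot $\sigma$ has node $\nu(\sigma)$, class $\kappa(\sigma)$): for each $j$, one slot of class $\oplus$ if $\zeta(j)=1$; two slots of class $\ominus$ if $\zeta(j)=2$; for each $q\in\mathbb N$, $n_j^q$ slots of class $q$ if $\zeta(j)=3$; no other slots on $j$. A slot allocation of $\Lambda$ is $\tau:\Lambda\to S$ with $\tau(\sigma)\in P^{\kappa(\sigma)}_{\nu(\sigma)}$; $X^\tau_i:=\{j:\exists\sigma,\nu(\sigma)=j,\tau(\sigma)=i\}$. Random experiment: $\zeta(j)$ independent over $j$, equal to $1,2,3$ with probabilities $\delta d_j^\oplus,\ \delta h_j,\ 1-\delta d_j^\oplus-\delta h_j$; given $\zeta$, each slot $\sigma\in\Lambda(\zeta)$ independently gets $\tau(\sigma)=i$ with probability $x_{i\nu(\sigma)}/d^{\kappa(\sigma)}_{\nu(\sigma)}$, $i\in P^{\kappa(\sigma)}_{\nu(\sigma)}$. *)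

(* Defs.v *)
From HB Require Import structures.
From mathcomp Require Import all_boot all_order all_algebra.
From mathcomp Require Import all_classical all_reals.
Set Implicit Arguments. Unset Strict Implicit. Unset Printing Implicit Defensive.
Import Order.TTheory GRing.Theory Num.Theory.
Local Open Scope classical_set_scope.
Local Open Scope ring_scope.

(* Slot classes: oplus, ominus, or q (a natural number; only q >= 1 is used). *)
Inductive slot_class := CPlus | CMinus | CQ of nat.

Definition slot_class_enc (k : slot_class) : option (option nat) :=
  match k with CPlus => None | CMinus => Some None | CQ q => Some (Some q) end.
Definition slot_class_dec (o : option (option nat)) : slot_class :=
  match o with None => CPlus | Some None => CMinus | Some (Some q) => CQ q end.
Lemma slot_class_encK : cancel slot_class_enc slot_class_dec.
Proof. by case. Qed.
HB.instance Definition _ := Countable.copy slot_class (can_type slot_class_encK).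

(* A slot: (node nu, class kappa, index distinguishing slots of the same node and class). *)
Definition slot (V : finType) : Type := (V * slot_class * nat)%type.
Definition nu {V : finType} (sg : slot V) : V := sg.1.1.
Definition kappa {V : finType} (sg : slot V) : slot_class := sg.1.2.

Section SPSC.
Variables (R : realType) (S V U : finType).
Variables (s : S -> R) (c : V -> R).
Variables (iu : U -> S) (T : U -> {set V}) (w : U -> R).

Definition lp_feasible (x : S -> V -> R) (y : U -> R) : Prop :=
  (forall i j, 0 <= x i j) /\
  (forall k, 0 <= y k) /\
  (forall k, y k <= \sum_(j in T k) x (iu k) j) /\
  (forall k, y k <= 1) /\
  (forall j, \sum_(i : S) x i j * s i <= c j) /\
  (forall i j, c j < s i -> x i j = 0) /\
  (forall i j, x i j <= 1).

Definition lp_obj (y : U -> R) : R := \sum_(k : U) y k * w k.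

Definition lp_optimal (x : S -> V -> R) (y : U -> R) : Prop :=
  lp_feasible x y /\
  forall x' y', lp_feasible x' y' -> lp_obj y' <= lp_obj y.

Definition beta : R := 1 / 4.
Definition gamma : R := 1 / 2.
Definition delta : R := 1 / 4.

Definition inP (j : V) (k : slot_class) (i : S) : bool :=
  match k with
  | CPlus => (c j / 2 < s i) && (s i <= c j)
  | CMinus => (c j / 4 < s i) && (s i <= c j / 2)
  | CQ q => (gamma ^+ q * c j * beta < s i) && (s i <= gamma ^+ q.-1 * c j * beta)
  end.

Variable x : S -> V -> R.

Definition dd (j : V) (k : slot_class) : R := \sum_(i | inP j k i) x i j.

(* v_j; with MathComp's convention r / 0 = 0. *)
Definition vv (j : V) : R :=
  delta * c j / (\sum_(i | s i <= c j * beta) s i * x i j).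

Definition nn (j : V) (q : nat) : int := Num.ceil (vv j * dd j (CQ q)).

Definition hh (j : V) : R :=
  if dd j CMinus < 2 then dd j CMinus else dd j CMinus / 2.

Definition Lambda (zeta : V -> nat) : set (slot V) :=
  fun sg =>
    let: (j, k, m) := sg in
    match zeta j, k with
    | 1%N, CPlus => m = 0%N
    | 2%N, CMinus => (m < 2)%N
    | 3%N, CQ q => (1 <= q)%N /\ (m%:Z < nn j q)
    | _, _ => False
    end.

Definition slot_allocation (zeta : V -> nat) (tau : slot V -> S) : Prop :=
  forall sg, Lambda zeta sg -> inP (nu sg) (kappa sg) (tau sg).

Definition Xtau (zeta : V -> nat) (tau : slot V -> S) (i : S) : set V :=
  [set j | exists sg, [/\ Lambda zeta sg, nu sg = j & tau sg = i]].

Definition pzeta (j : V) (a : nat) : R :=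
  match a with
  | 1%N => delta * dd j CPlus
  | 2%N => delta * hh j
  | 3%N => 1 - delta * dd j CPlus - delta * hh j
  | _ => 0
  end.

Definition prob_zeta (zeta : V -> nat) : R := \prod_(j : V) pzeta j (zeta j).

Definition prob_tau (zeta : V -> nat) (tau : slot V -> S) : R :=
  \big[*%R/1]_(sg \in Lambda zeta) (x (tau sg) (nu sg) / dd (nu sg) (kappa sg)).

End SPSC.

(* Main.v *)
Require Import Defs.
From HB Require Import structures.
From mathcomp Require Import all_boot all_order all_algebra.
From mathcomp Require Import all_classical all_reals.
From mathcomp Require Import ring lra zify.
Import Order.TTheory GRing.Theory Num.Theory.
Local Open Scope classical_set_scope.
Local Open Scope ring_scope.

Lemma sum_le_pw (R : realType) (I : finType) (P : pred I) (F G : I -> R) :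
  (forall i, P i -> F i <= G i) -> (forall i, 0 <= G i) ->
  \sum_(i | P i) F i <= \sum_i G i.
Proof.
move=> h g; rewrite big_mkcond; apply: ler_sum => i _.
by case: ifP => [/h|_].
Qed.

Lemma big_uniq_seq (R : realType) (I : eqType) (r : seq I) (P : pred I)
  (F : I -> R) a : uniq r -> a \in r -> P a ->
  (forall b, b \in r -> P b -> b = a) -> \sum_(i <- r | P i) F i = F a.
Proof.
move=> ur ar Pa h; rewrite big_mkcond (bigD1_seq a) //= Pa big1_seq ?addr0 //.
move=> b /andP[nb br]; case: ifP => // Pb.
by rewrite (h b br Pb) eqxx in nb.
Qed.

Lemma geom_half (R : realType) (M : nat) :
  \sum_(0 <= q < M) (1/2 : R) ^+ q + 2 * (1/2) ^+ M = 2.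
Proof.
elim: M => [|M IH]; first by rewrite big_geq // expr0 add0r mulr1.
rewrite big_nat_recr //= exprS; move: IH; lra.
Qed.

Lemma pow2_ge (R : realType) (n : nat) : (n%:R : R) <= 2 ^+ n.
Proof.
elim: n => [|n IH]; first by rewrite expr0 ler01.
rewrite exprS -natr1.
have : 1 <= (2:R) ^+ n by apply: exprn_ege1; lra.
lra.
Qed.

Lemma inPQ_uniq (R : realType) (S V : finType) (s : S -> R) (c : V -> R) j
  q1 q2 i : 0 < c j -> inP s c j (CQ q1) i -> inP s c j (CQ q2) i -> q1 = q2.
Proof.
move=> hc.
have key : forall a b, (a < b)%N -> inP s c j (CQ a) i -> inP s c j (CQ b) i -> False.
  move=> a b ab /andP[h1 _] /andP[_ h2].
  have : gamma R ^+ b.-1 <= gamma R ^+ a.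
    apply: ler_wiXn2l; rewrite /gamma; try lra; lia.
  have hb : 0 < c j * beta R by apply: mulr_gt0 => //; rewrite /beta; lra.
  move=> H; have H2 := ler_wpM2r (ltW hb) H; rewrite -!mulrA in h1 h2.
  by have := lt_le_trans h1 (le_trans h2 H2); rewrite ltxx.
move=> h1 h2; case: (ltngtP q1 q2) => // H.
- by case: (key _ _ H h1 h2).
- by case: (key _ _ H h2 h1).
Qed.

Theorem theorem9 (R : realType) (S V U : finType)
  (s : S -> R) (c : V -> R) (iu : U -> S) (T : U -> {set V}) (w : U -> R)
  (x : S -> V -> R) (y : U -> R)
  (hs : forall i, 0 < s i) (hc : forall j, 0 < c j) (hw : forall k, 0 < w k)
  (hopt : lp_optimal s c iu T w x y)
  (zeta : V -> nat) (tau : slot V -> S)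
  (hzeta : forall j, zeta j \in [:: 1%N; 2%N; 3%N])
  (htau : slot_allocation s c x zeta tau)
  (hprob : prob_zeta s c x zeta * prob_tau s c x zeta tau != 0) :
  forall j : V, \sum_(i : S | `[< Xtau s c x zeta tau i j >]) s i <= c j.
Proof.
case: hopt => [[hx _] _] j.
have hcj := hc j.
have Xslot : forall i, `[< Xtau s c x zeta tau i j >] ->
    exists k m, Lambda s c x zeta (j, k, m) /\ tau (j, k, m) = i.
  move=> i /asboolP [[[j' k] m] [L /= e t]].
  by exists k, m; rewrite -e.
have := hzeta j; rewrite !inE => /or3P [/eqP z|/eqP z|/eqP z].
-
  set t0 := tau (j, CPlus, 0%N).
  have L0 : Lambda s c x zeta (j, CPlus, 0%N) by rewrite /Lambda z.
  have := htau _ L0; rewrite /= => /andP[_ h0].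
  apply: le_trans (@sum_le_pw _ _ _ _ (fun i => if i == t0 then s i else 0) _ _) _.
  + move=> i /Xslot [k [m [L <-]]]; move: L; rewrite /Lambda z.
    by case: k => // -> ; rewrite eqxx.
  + by move=> i; case: ifP => // _; exact: ltW.
  by rewrite -big_mkcond big_pred1_eq.
-
  set t0 := tau (j, CMinus, 0%N).
  set t1 := tau (j, CMinus, 1%N).
  have L0 : Lambda s c x zeta (j, CMinus, 0%N) by rewrite /Lambda z.
  have L1 : Lambda s c x zeta (j, CMinus, 1%N) by rewrite /Lambda z.
  have := htau _ L0; rewrite /= => /andP[_ h0].
  have := htau _ L1; rewrite /= => /andP[_ h1].
  apply: le_trans (@sum_le_pw _ _ _ _ (fun i => (if i == t0 then s i else 0) + (if i == t1 then s i else 0)) _ _) _.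
  + move=> i /Xslot [k [m [L <-]]]; move: L; rewrite /Lambda z.
    case: k => // hm.
    have : (m = 0 \/ m = 1)%N by lia.
    case=> ->.
    * by rewrite -/t0 eqxx lerDl; case: ifP => _ //; exact: ltW.
    * by rewrite -/t1 eqxx lerDr; case: ifP => _ //; exact: ltW.
  + by move=> i; apply: addr_ge0; case: ifP => // _; exact: ltW.
  rewrite /= big_split /= -!big_mkcond !big_pred1_eq.
  rewrite /nu /= in h0 h1.
  lra.
-
  have hb : 0 < c j * beta R by apply: mulr_gt0 => //; rewrite /beta; lra.
  have slotQ : forall i, `[< Xtau s c x zeta tau i j >] ->
      exists q m, [/\ (1 <= q)%N, m%:Z < nn s c x j q, tau (j, CQ q, m) = i
                   & inP s c j (CQ q) i].
    move=> i /Xslot [k [m [L e]]].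
    have := htau _ L; rewrite /= e; move: L e; rewrite /Lambda z.
    case: k => // q [q1 mq] e hP.
    by exists q, m.
  set D := \sum_(i | s i <= c j * beta R) s i * x i j.
  have D0 : 0 <= D.
    by apply: sumr_ge0 => i _; apply: mulr_ge0; [exact: ltW|exact: hx].
  set v := vv s c x j.
  have v0 : 0 <= v.
    rewrite /v /vv; apply: divr_ge0 => //; apply: mulr_ge0; last exact: ltW.
    by rewrite /delta; lra.
  have vD : v * D <= delta R * c j.
    rewrite /v /vv -/D; have [->|Dn0] := eqVneq D 0.
      by rewrite mulr0; apply: mulr_ge0; [rewrite /delta; lra | exact: ltW].
    by rewrite divfK.
  set M := (\max_(i : S) `|Num.ceil (c j * beta R / s i)|%N).+1.
  have qb : forall q i, inP s c j (CQ q) i -> (q < M.+1)%N.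
    move=> q i /andP[_ h].
    have hsi := hs i.
    have h2 : (q.-1%:R : R) <= c j * beta R / s i.
      rewrite ler_pdivlMr //.
      apply: le_trans (ler_wpM2r (ltW hsi) (pow2_ge R q.-1)) _.
      have t0 : (0 : R) <= 2 ^+ q.-1 by apply: exprn_ge0.
      have := ler_wpM2l t0 h.
      have E : (2 : R) ^+ q.-1 * (gamma R ^+ q.-1 * c j * beta R)
             = (2 ^+ q.-1 * gamma R ^+ q.-1) * (c j * beta R) by ring.
      rewrite E -exprMn /gamma (_ : (2 : R) * (1 / 2) = 1) ?expr1n ?mul1r //.
      lra.
    have h3 : (q.-1%:R : R) <= (`|Num.ceil (c j * beta R / s i)|%N)%:R.
      rewrite natr_absz ger0_norm; first by apply: le_trans h2 (ceil_ge _).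
      rewrite ceil_ge0; apply: lt_le_trans (_ : (-1 : R) < 0) _; first lra.
      by apply: divr_ge0; [exact: ltW | exact: ltW].
    rewrite ler_nat in h3.
    have := @leq_bigmax _ (fun i => `|Num.ceil (c j * beta R / s i)|%N) i.
    rewrite /M; lia.
  set X := fun i => `[< Xtau s c x zeta tau i j >].
  have stepA : \sum_(i | X i) s i <=
      \sum_i \sum_(0 <= q < M.+1) (if inP s c j (CQ q) i && X i then s i else 0).
    apply: sum_le_pw => [i Xi|i]; last first.
      by apply: sumr_ge0 => q _; case: ifP => // _; exact: ltW.
    have [q [m [q1 mq e hP]]] := slotQ i Xi.
    rewrite -big_mkcond (@big_uniq_seq _ _ _ _ _ q) //.
    - exact: iota_uniq.
    - by rewrite mem_index_iota; move: (qb _ _ hP); lia.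
    - by rewrite hP.
    - by move=> b _ /andP[hb' _]; exact: (@inPQ_uniq _ _ _ s c j _ _ _ hcj hb' hP).
  apply: le_trans stepA _.
  rewrite exchange_big big_nat_recl //.
  rewrite big1 ?Monoid.mul1m; last first.
    move=> i _; case: ifP => // /andP[/andP[h1 h2] _].
    by have := lt_le_trans h1 h2; rewrite ltxx.
  have stepC : forall q, \sum_i (if inP s c j (CQ q.+1) i && X i then s i else 0)
      <= (v * dd s c x j (CQ q.+1) + 1) * (gamma R ^+ q * c j * beta R).
    move=> q.
    set K := gamma R ^+ q * c j * beta R.
    set A := [set i | inP s c j (CQ q.+1) i && X i]%SET.
    have K0 : 0 <= K.
      rewrite /K -mulrA; apply: mulr_ge0; last exact: ltW.
      by apply: exprn_ge0; rewrite /gamma; lra.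
    rewrite -big_mkcond /=.
    apply: le_trans (_ : \sum_(i in A) K <= _).
      rewrite (eq_bigl (fun i => i \in A)); last by move=> i; rewrite /A inE.
      by apply: ler_sum => i; rewrite /A inE => /andP[/andP[_ h] _].
    rewrite sumr_const.
    set n := `|nn s c x j q.+1|%N.
    have cardA : (#|A| <= n)%N.
      apply: leq_trans (subset_leq_card (B := [set tau (j, CQ q.+1, val m) | m : 'I_n]%SET) _) _.
        apply/fintype.subsetP => i; rewrite inE => /andP[hP Xi].
        have [q' [m [q1 mq e hP']]] := slotQ i Xi.
        have eq' := @inPQ_uniq _ _ _ s c j _ _ _ hcj hP' hP. subst q'.
        have mn : (m < n)%N by rewrite /n; lia.
        by apply/imsetP; exists (Ordinal mn).
      by apply: leq_trans (leq_imset_card _ _) _; rewrite card_ord.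
    set d := dd s c x j (CQ q.+1).
    have d0 : 0 <= d by apply: sumr_ge0 => i _; exact: hx.
    have vd0 : 0 <= v * d by apply: mulr_ge0.
    have nn0 : 0 <= nn s c x j q.+1 by rewrite /nn -/v -/d ceil_ge0; lra.
    have nnle : (nn s c x j q.+1)%:~R <= v * d + 1.
      have := ceilB1_lt (v * d); rewrite intrB /nn -/v -/d; lra.
    rewrite -mulr_natl.
    apply: le_trans (_ : n%:R * K <= _).
      by apply: ler_wpM2r => //; rewrite ler_nat.
    apply: ler_wpM2r => //.
    by rewrite /n natr_absz ger0_norm.
  apply: le_trans; first by apply: ler_sum => q _; exact: stepC.
  have geo : \sum_(0 <= q < M) gamma R ^+ q <= 2.
    have := geom_half R M; rewrite /gamma.
    have : (0:R) <= (1/2) ^+ M by apply: exprn_ge0; lra.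
    lra.
  have D2 : \sum_(0 <= q < M) dd s c x j (CQ q.+1) * (gamma R ^+ q * c j * beta R) <= 2 * D.
    apply: le_trans (_ : \sum_(0 <= q < M) \sum_i (if inP s c j (CQ q.+1) i then 2 * (s i * x i j) else 0) <= _).
      apply: ler_sum => q _; rewrite /dd mulr_suml big_mkcond /=; apply: ler_sum => i _.
      case: ifP => [/andP[h1 _]|_]; last exact: lexx.
      set K := gamma R ^+ q * c j * beta R.
      have E : gamma R ^+ q.+1 * c j * beta R = K / 2 by rewrite /K exprSr /gamma; field.
      rewrite E in h1.
      have hK : K <= 2 * s i by lra.
      have e : x i j * (2 * s i) = 2 * (s i * x i j) by ring.
      rewrite -e; apply: ler_wpM2l => //; exact: hx.
    rewrite exchange_big /D mulr_sumr [X in _ <= X]big_mkcond.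
    apply: ler_sum => i _.
    case: (boolP (has (fun q => inP s c j (CQ q.+1) i) (index_iota 0 M))) => [/hasP [q qin Pq] | /hasPn hn].
    - rewrite -big_mkcond (@big_uniq_seq _ _ _ _ _ q) //; last first.
        by move=> b _ Pb; have := @inPQ_uniq _ _ _ s c j _ _ _ hcj Pb Pq; case.
        exact: iota_uniq.
      have : s i <= c j * beta R.
        move: Pq => /andP[_ h]; apply: le_trans h _.
        rewrite -mulrA; apply: ler_piMl; first exact: ltW.
        by apply: exprn_ile1; rewrite /gamma; lra.
      by move=> ->.
    - rewrite big1_seq; last by move=> q /andP[_ qin]; rewrite (negbTE (hn q qin)).
      case: ifP => _; last exact: lexx.
      by apply: mulr_ge0 => //; apply: mulr_ge0; [exact: ltW | exact: hx].
  rewrite (eq_bigr (fun q => v * (dd s c x j (CQ q.+1) * (gamma R ^+ q * c j * beta R)) + (c j * beta R) * gamma R ^+ q)); last by move=> q _; ring.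
  rewrite big_split /= -!mulr_sumr.
  have h1 := ler_wpM2l v0 D2.
  have h2 := ler_wpM2l (ltW hb) geo.
  have h3 : v * (2 * D) = 2 * (v * D) by ring.
  rewrite h3 in h1.
  move: vD h1 h2; rewrite /delta /beta; lra.
Qed.
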